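(* Let $X,Y,Z$ be random variables on finite alphabets $\mathcal{X},\mathcal{Y},\mathcal{Z}$, and define the redundant information $\operatorname{Red}(X,Y\to Z)=I(X;Z)-\operatorname{Un}(X\to Z\mid Y)$ with $\operatorname{Un}$ as below. Then $\operatorname{Red}(X,Y\to Z)\ge 0$.
   Context: For each $y\in\mathcal{Y}$ with $\Pr(Y=y)>0$, let $(A_y,B_y,C_y)$ be the random triple on $\mathcal{X}\times\mathcal{Y}\times\mathcal{Z}$ with $\Pr(A_y=x,B_y=y',C_y=z)=0$ if $\Pr(Z=z)=0$ and $\Pr(A_y=x,B_y=y',C_y=z)=\Pr(X=x,Y=y',Z=z)\Pr(Z=z\mid Y=y)/\Pr(Z=z)$ otherwise. The unique information is $\operatorname{Un}(X\to Z\mid Y)=\sum_{y:\Pr(Y=y)>0}\Pr(Y=y)\,I(A_y;C_y)$, where $I$ is mutual information. *)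

(* Defs.v *)
From mathcomp Require Import all_boot all_order all_algebra.
From mathcomp Require Import reals exp.
Set Implicit Arguments. Unset Strict Implicit. Unset Printing Implicit Defensive.
Import Order.TTheory GRing.Theory Num.Theory.
Local Open Scope ring_scope.

Section InfoDefs.
Variable R : realType.

Definition is_pmf (T : finType) (p : T -> R) : Prop :=
  (forall t, 0 <= p t) /\ \sum_(t : T) p t = 1.

Definition mutual_info (U V : finType) (q : U * V -> R) : R :=
  \sum_(a : U) \sum_(c : V)
    (if q (a, c) == 0 then 0
     else q (a, c) * ln (q (a, c) /
            ((\sum_(c' : V) q (a, c')) * (\sum_(a' : U) q (a', c))))).

Variables (X Y Z : finType).
Variable P : X * Y * Z -> R.

Definition PY (y : Y) : R := \sum_(x : X) \sum_(z : Z) P (x, y, z).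
Definition PZ (z : Z) : R := \sum_(x : X) \sum_(y : Y) P (x, y, z).
Definition PYZ (y : Y) (z : Z) : R := \sum_(x : X) P (x, y, z).
Definition PXZ (x : X) (z : Z) : R := \sum_(y : Y) P (x, y, z).

(* Pr(Z = z | Y = y), used only when Pr(Y = y) > 0. *)
Definition condZY (z : Z) (y : Y) : R := PYZ y z / PY y.

(* Joint pmf of the triple (A_y, B_y, C_y). *)
Definition triple_y (y : Y) (t : X * Y * Z) : R :=
  let: (x, y', z) := t in
  if PZ z == 0 then 0 else P (x, y', z) * condZY z y / PZ z.

Definition pairAC_y (y : Y) (u : X * Z) : R :=
  \sum_(y' : Y) triple_y y (u.1, y', u.2).

Definition Un : R := \sum_(y : Y | 0 < PY y) PY y * mutual_info (pairAC_y y).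

Definition IXZ : R := mutual_info (fun u : X * Z => PXZ u.1 u.2).

Definition Red : R := IXZ - Un.

End InfoDefs.

(* Main.v *)
Require Import Defs.
From mathcomp Require Import all_boot all_order all_algebra.
From mathcomp Require Import reals exp.
From mathcomp Require Import ring lra.
Import Order.TTheory GRing.Theory Num.Theory.
Local Open Scope ring_scope.

Section Proof.
Variable R : realType.
Variables (X Y Z : finType).
Variable P : X * Y * Z -> R.
Hypothesis P0 : forall t, 0 <= P t.
Hypothesis P1 : \sum_t P t = 1.

Lemma le_sum1 (I : finType) (F : I -> R) i :
  (forall j, 0 <= F j) -> F i <= \sum_j F j.
Proof. by move=> F0; rewrite (bigD1 i) //= lerDl sumr_ge0. Qed.

Lemma ifq (a b : R) : (if a == 0 then 0 else a * b) = a * b.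
Proof. by case: eqP => // ->; rewrite mul0r. Qed.

Lemma ln_le_sub1 (t : R) : 0 < t -> ln t <= t - 1.
Proof. move=> t0; have := @le_ln1Dx R (t - 1); rewrite addrCA subrr addr0; apply; lra. Qed.

Lemma PXZ_ge0 x z : 0 <= PXZ P x z.
Proof. exact: sumr_ge0. Qed.
Lemma PYZ_ge0 y z : 0 <= PYZ P y z.
Proof. exact: sumr_ge0. Qed.
Lemma PY_ge0 y : 0 <= PY P y.
Proof. by apply: sumr_ge0 => x _; apply: sumr_ge0. Qed.
Lemma PZ_ge0 z : 0 <= PZ P z.
Proof. by apply: sumr_ge0 => x _; apply: sumr_ge0. Qed.

Lemma PXZ_le x z : PXZ P x z <= PZ P z.
Proof. exact: (@le_sum1 X (fun x0 => PXZ P x0 z) x (fun j => PXZ_ge0 j z)). Qed.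
Lemma PYZ_le_PZ y z : PYZ P y z <= PZ P z.
Proof.
rewrite /PZ /PYZ; apply: ler_sum => x _; by apply: le_sum1.
Qed.
Lemma PYZ_le_PY y z : PYZ P y z <= PY P y.
Proof.
rewrite /PY /PYZ; apply: ler_sum => x _; by apply: le_sum1 => j.
Qed.

Lemma PZ_sumPYZ z : PZ P z = \sum_y PYZ P y z.
Proof. by rewrite /PZ /PYZ exchange_big. Qed.
Lemma PY_sumPYZ y : PY P y = \sum_z PYZ P y z.
Proof. by rewrite /PY /PYZ exchange_big. Qed.

Lemma sum_PXZ : \sum_x \sum_z PXZ P x z = 1.
Proof.
rewrite -P1 (eq_bigr (fun t => P (t.1, t.2))); last by case.
rewrite -(pair_bigA _ (fun (xy : X * Y) (z : Z) => P (xy, z))) /=.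
rewrite (eq_bigr (fun xy => \sum_z P (xy.1, xy.2, z))); last by case.
rewrite -(pair_bigA _ (fun (x : X) (y : Y) => \sum_z P (x, y, z))) /=; apply: eq_bigr => x _.
by rewrite /PXZ exchange_big.
Qed.

Definition q y x z := PXZ P x z * condZY P z y / PZ P z.

Lemma pairACE y x z : pairAC_y P y (x, z) = q y x z.
Proof.
rewrite /pairAC_y /q /=; case: eqP => [->|_].
  by rewrite big1 ?invr0 ?mulr0.
by rewrite /PXZ -!mulr_suml.
Qed.

Lemma q_ge0 y x z : 0 <= q y x z.
Proof.
rewrite /q /condZY; apply: mulr_ge0; last by rewrite invr_ge0 PZ_ge0.
apply: mulr_ge0; first exact: PXZ_ge0.
by apply: mulr_ge0; [apply: PYZ_ge0 | rewrite invr_ge0 PY_ge0].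
Qed.

Lemma sumq y z : \sum_x q y x z = condZY P z y.
Proof.
rewrite /q -!mulr_suml.
have -> : \sum_x PXZ P x z = PZ P z by [].
have [Z0|Z0] := eqVneq (PZ P z) 0.
  have : PYZ P y z = 0.
    by apply/eqP; rewrite eq_le PYZ_ge0 andbT -Z0 PYZ_le_PZ.
  by rewrite Z0 /condZY => ->; rewrite !(mul0r, mulr0).
by rewrite mulrAC divff // mul1r.
Qed.

Lemma sum_cond y : 0 < PY P y -> \sum_z condZY P z y = 1.
Proof.
move=> Y0; rewrite /condZY -mulr_suml -PY_sumPYZ divff //.
by rewrite gt_eqF.
Qed.

Definition L x z := ln (PXZ P x z / ((\sum_z' PXZ P x z') * (\sum_x' PXZ P x' z))).
Definition PX x := \sum_z' PXZ P x z'.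
Definition m y x := \sum_z' q y x z'.

Lemma key y x z : 0 < PY P y ->
  q y x z * ln (q y x z / (m y x * \sum_x' q y x' z)) <=
  q y x z * L x z + q y x z * (PX x / m y x) - q y x z.
Proof.
move=> Y0; rewrite sumq.
have [q0|qn0] := eqVneq (q y x z) 0; first by rewrite q0 !mul0r subr0 addr0.
have qp : 0 < q y x z by rewrite lt_def qn0 q_ge0.
move: (qn0); rewrite /q /condZY !mulf_eq0 !negb_or !invr_eq0 => /andP[/andP[a /andP[b c]] d].
have pxz : 0 < PXZ P x z by rewrite lt_def a PXZ_ge0.
have pyz : 0 < PYZ P y z by rewrite lt_def b PYZ_ge0.
have pz : 0 < PZ P z by rewrite lt_def d PZ_ge0.
have mq : q y x z <= m y x by apply: le_sum1 => j; apply: q_ge0.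
have mp : 0 < m y x by apply: lt_le_trans mq.
have px : PXZ P x z <= PX x by apply: le_sum1 => j; apply: PXZ_ge0.
have pxp : 0 < PX x by apply: lt_le_trans px.
have E : q y x z / (m y x * (PYZ P y z / PY P y)) =
   (PXZ P x z / (PX x * PZ P z)) * (PX x / m y x).
  rewrite /q /condZY; field.
  by rewrite !gt_eqF.
rewrite /condZY E lnM; last 2 first.
  by rewrite posrE; apply: divr_gt0 => //; apply: mulr_gt0.
  by rewrite posrE; apply: divr_gt0.
rewrite /L -/(PX x).
have -> : \sum_x' PXZ P x' z = PZ P z by [].
rewrite mulrDr -addrA lerD2l.
have := ln_le_sub1 _ (divr_gt0 pxp mp).
move=> H; have := ler_wpM2l (ltW qp) H; rewrite mulrBr mulr1 //.
Qed.

Lemma partB y : 0 < PY P y ->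
  \sum_x \sum_z (q y x z * (PX x / m y x) - q y x z) <= 0.
Proof.
move=> Y0.
have -> : \sum_x \sum_z (q y x z * (PX x / m y x) - q y x z) =
   \sum_x (m y x * (PX x / m y x)) - \sum_z \sum_x q y x z.
  rewrite [in RHS]exchange_big /= -sumrB; apply: eq_bigr => x _.
  by rewrite sumrB -mulr_suml.
rewrite (eq_bigr (fun z => condZY P z y)); last by move=> z _; rewrite sumq.
rewrite sum_cond // subr_le0 -sum_PXZ; apply: ler_sum => x _.
rewrite -/(PX x).
have [->|mn0] := eqVneq (m y x) 0; first by rewrite mul0r sumr_ge0 // => *; apply: PXZ_ge0.
by rewrite mulrC mulfVK.
Qed.

Lemma partA x z : \sum_(y | 0 < PY P y) PY P y * q y x z = PXZ P x z.
Proof.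
have [Z0|Z0] := eqVneq (PZ P z) 0.
  have : PXZ P x z = 0 by apply/eqP; rewrite eq_le PXZ_ge0 andbT -Z0 PXZ_le.
  by move=> ->; rewrite big1 // => y _; rewrite /q Z0 invr0 !mulr0.
rewrite (eq_bigr (fun y => PXZ P x z * PYZ P y z / PZ P z)); last first.
  move=> y Y0; rewrite /q /condZY; field; by rewrite ?Z0 ?gt_eqF ?andbT ?andTb.
rewrite -mulr_suml -mulr_sumr.
have -> : \sum_(y | 0 < PY P y) PYZ P y z = PZ P z.
  rewrite PZ_sumPYZ big_mkcond /=; apply: eq_bigr => y _.
  case: ifP => // /negbT; rewrite -leNgt => H.
  apply/esym/eqP; rewrite eq_le PYZ_ge0 andbT.
  by apply: le_trans (PYZ_le_PY y z) H.
by rewrite mulfK.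
Qed.

Lemma main : Un P <= IXZ P.
Proof.
rewrite /Un /IXZ /mutual_info /=.
under eq_bigr => y _ do under eq_bigr => x _ do under eq_bigr => z _ do
  rewrite ifq !pairACE.
under [X in _ <= X]eq_bigr => x _ do under eq_bigr => z _ do rewrite ifq.
apply: le_trans (_ : \sum_(y | 0 < PY P y) \sum_x \sum_z PY P y * q y x z * L x z <= _).
  apply: ler_sum => y Y0.
  apply: le_trans (_ : PY P y * \sum_x \sum_z
     (q y x z * L x z + (q y x z * (PX x / m y x) - q y x z)) <= _).
    apply: ler_wpM2l; first exact: PY_ge0.
    apply: ler_sum => x _; apply: ler_sum => z _.
    have E1 : \sum_c' pairAC_y P y (x, c') = m y x.
      by apply: eq_bigr => c _; exact: pairACE.
    have E2 : \sum_a' pairAC_y P y (a', z) = \sum_a' q y a' z.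
      by apply: eq_bigr => a _; exact: pairACE.
    rewrite E1 E2 addrA; exact: key.
  rewrite (eq_bigr (fun x => \sum_z q y x z * L x z +
        \sum_z (q y x z * (PX x / m y x) - q y x z))); last first.
    by move=> x _; rewrite big_split.
  rewrite big_split /= mulrDr -[X in _ <= X]addr0.
  apply: lerD.
    rewrite mulr_sumr; apply: ler_sum => x _; rewrite mulr_sumr.
    by apply: ler_sum => z _; rewrite mulrA.
  by rewrite pmulr_rle0 // partB.
rewrite exchange_big /=; apply: ler_sum => x _.
rewrite exchange_big /=; apply: ler_sum => z _.
by rewrite -mulr_suml partA.
Qed.

End Proof.

Theorem corollary3 (R : realType) (X Y Z : finType) (P : X * Y * Z -> R) :
  is_pmf P -> 0 <= Red P.
Proof.
move=> [P0 P1]; rewrite /Red subr_ge0; exact: main.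
Qed.
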